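(* Let $U\subseteq\mathbb{R}^d$ be equipped with the Euclidean ($\ell_2$) metric, fix $t\in\mathbb{R}^d$, and let $f:U\to V\subseteq\mathbb{R}$ be such that there is $f_0:\mathbb{R}_{\ge0}\to\mathbb{R}$ with $f(x)=f_0(\|x-t\|)$ for all $x\in U$. Let $g(x,x')=g_0(\|x-x'\|)$ be a smooth growth function. Let $x\ne t$ and suppose $(w^*,z^* )$ with $w^*\ne z^*$ satisfies $B^*(x)=\frac{|f(w^* )-f(z^* )|}{\|w^*-z^*\|\,g(x,z^* )}$. Then there is a pair $(w_L,z_L)$ of points on the line connecting $x$ and $t$ such that $\frac{|f(w_L)-f(z_L)|}{\|w_L-z_L\|\,g(x,z_L)}\ge B^*(x)$.
   Context: A smooth growth function is $g(x,x')=g_0(\|x-x'\|)$ with $g_0:\mathbb{R}_{\ge0}\to\mathbb{R}_{\ge1}$ monotonically increasing, $g_0(0)=1$, $g_0(r_1+r_2)\le g_0(r_1)g_0(r_2)$. $B^*(x)$ denotes the $g$-smooth sensitivity of $f$ at $x$, i.e. $\sup_z\frac{\mathrm{L}_{f,\Lambda}(z)}{g(x,z)}$, where $\mathrm{L}_{f,\Lambda}(z)$ is the infimum of $K$ with $|f(z)-f(w)|\le K\|z-w\|$ for all $w$ with $\|z-w\|\le\Lambda$; $f$ is understood to extend by the same formula $f_0(\|\cdot-t\|)$ to all of $\mathbb{R}^d$. *)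

(* Defs.v *)
From HB Require Import structures.
From mathcomp Require Import all_boot all_order all_algebra.
From mathcomp Require Import all_classical all_reals all_analysis.
Set Implicit Arguments. Unset Strict Implicit. Unset Printing Implicit Defensive.
Import Order.TTheory GRing.Theory Num.Theory.
Local Open Scope classical_set_scope.
Local Open Scope ring_scope.

Definition enorm {R : realType} {d : nat} (v : 'rV[R]_d) : R :=
  Num.sqrt (\sum_(i < d) v ord0 i ^+ 2).

Definition smooth_growth {R : realType} (g0 : R -> R) : Prop :=
  [/\ (forall r, 0 <= r -> 1 <= g0 r),
      (forall r1 r2, 0 <= r1 -> r1 <= r2 -> g0 r1 <= g0 r2),
      g0 0 = 1 &
      (forall r1 r2, 0 <= r1 -> 0 <= r2 -> g0 (r1 + r2) <= g0 r1 * g0 r2)].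

Definition growth {R : realType} {d : nat} (g0 : R -> R) (x x' : 'rV[R]_d) : R :=
  g0 (enorm (x - x')).

Definition loc_lip {R : realType} {d : nat} (f : 'rV[R]_d -> R) (Lam : R)
    (z : 'rV[R]_d) : \bar R :=
  ereal_inf [set K%:E | K in [set K : R | 0 <= K /\
     forall w, enorm (z - w) <= Lam -> `|f z - f w| <= K * enorm (z - w)]].

Definition smooth_sens {R : realType} {d : nat} (f : 'rV[R]_d -> R) (Lam : R)
    (g0 : R -> R) (x : 'rV[R]_d) : \bar R :=
  ereal_sup [set (loc_lip f Lam z * ((growth g0 x z)^-1)%:E)%E | z in [set: 'rV[R]_d]].

Definition sens_ratio {R : realType} {d : nat} (f : 'rV[R]_d -> R) (g0 : R -> R)
    (x w z : 'rV[R]_d) : R :=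
  `|f w - f z| / (enorm (w - z) * growth g0 x z).

Definition on_line {R : realType} {d : nat} (x t p : 'rV[R]_d) : Prop :=
  exists s : R, p = x + s *: (t - x).

(* Main.v *)
Require Import Defs.
From HB Require Import structures.
From mathcomp Require Import all_boot all_order all_algebra.
From mathcomp Require Import ring lra.
From mathcomp Require Import all_classical all_reals all_analysis.
Import Order.TTheory GRing.Theory Num.Theory.
Local Open Scope ring_scope.

Section Aux.
Variables (R : realType) (d : nat).
Implicit Types u v : 'rV[R]_d.

Definition ss v := \sum_(i < d) v ord0 i ^+ 2.
Definition dot u v := \sum_(i < d) u ord0 i * v ord0 i.

Lemma ss_ge0 v : 0 <= ss v.
Proof. by apply: sumr_ge0 => i _; rewrite sqr_ge0. Qed.

Lemma enorm_ge0 v : 0 <= enorm v.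
Proof. exact: sqrtr_ge0. Qed.

Lemma enorm_sqr v : enorm v ^+ 2 = ss v.
Proof. exact: (sqr_sqrtr (ss_ge0 v)). Qed.

Lemma ss_eq0 v : ss v = 0 -> v = 0.
Proof.
move=> /eqP; rewrite psumr_eq0 => [/allP H|i _]; last by rewrite sqr_ge0.
apply/rowP => i; rewrite mxE; apply/eqP; rewrite -sqrf_eq0.
by have := H i (mem_index_enum _).
Qed.

Lemma enorm0 : enorm (0 : 'rV[R]_d) = 0.
Proof.
rewrite /enorm big1 ?sqrtr0 // => i _; by rewrite mxE expr2 mul0r.
Qed.

Lemma enorm_gt0 v : v != 0 -> 0 < enorm v.
Proof.
move=> hv; rewrite lt_def enorm_ge0 andbT; apply/eqP => h.
move/eqP: hv; apply; apply: ss_eq0; by rewrite -enorm_sqr h expr2 mul0r.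
Qed.

Lemma enorm_scale c v : enorm (c *: v) = `|c| * enorm v.
Proof.
rewrite /enorm -/(ss (c *: v)) -/(ss v).
have -> : ss (c *: v) = c ^+ 2 * ss v.
  rewrite /ss mulr_sumr; apply: eq_bigr => i _; by rewrite mxE exprMn.
by rewrite sqrtrM ?sqr_ge0 // sqrtr_sqr.
Qed.

Lemma enormN v : enorm (- v) = enorm v.
Proof. by rewrite -scaleN1r enorm_scale normrN normr1 mul1r. Qed.

Lemma ss_add u v : ss (u + v) = ss u + 2 * dot u v + ss v.
Proof.
rewrite /ss /dot mulr_sumr -!big_split; apply: eq_bigr => i _ /=.
rewrite mxE; ring.
Qed.

Lemma cs u v : dot u v <= enorm u * enorm v.
Proof.
have H0 : 0 <= \sum_(i < d) (u ord0 i * enorm v - v ord0 i * enorm u) ^+ 2.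
  by apply: sumr_ge0 => i _; rewrite sqr_ge0.
have E : \sum_(i < d) (u ord0 i * enorm v - v ord0 i * enorm u) ^+ 2 =
   2 * (enorm u * enorm v) * (enorm u * enorm v - dot u v).
  transitivity (enorm v ^+ 2 * ss u + (- (2 * enorm u * enorm v)) * dot u v
                 + enorm u ^+ 2 * ss v).
    rewrite /ss /dot !mulr_sumr -!big_split; apply: eq_bigr => i _ /=; ring.
  rewrite -[ss u]enorm_sqr -[ss v]enorm_sqr; ring.
rewrite E in H0.
have hA := enorm_ge0 u; have hB := enorm_ge0 v.
case: (ltP 0 (enorm u * enorm v)) => hAB.
  nra.
have : enorm u * enorm v = 0 by apply/eqP; rewrite eq_le hAB mulr_ge0.
move/eqP; rewrite mulf_eq0 => /orP [] /eqP h.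
  have : u = 0 by apply: ss_eq0; rewrite -enorm_sqr h expr2 mul0r.
  move=> ->; rewrite /dot big1 ?mulr_ge0 ?enorm_ge0 // => i _; by rewrite mxE mul0r.
have : v = 0 by apply: ss_eq0; rewrite -enorm_sqr h expr2 mul0r.
move=> ->; rewrite /dot big1 ?mulr_ge0 ?enorm_ge0 // => i _; by rewrite mxE mulr0.
Qed.

Lemma enorm_tri u v : enorm (u + v) <= enorm u + enorm v.
Proof.
have h1 := enorm_sqr (u + v); rewrite ss_add -!enorm_sqr in h1.
have := cs u v.
have := enorm_ge0 (u + v); have := enorm_ge0 u; have := enorm_ge0 v.
nra.
Qed.

Lemma enorm_rev u v : `|enorm u - enorm v| <= enorm (u - v).
Proof.
have h1 := enorm_tri (u - v) v; rewrite subrK in h1.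
have h2 := enorm_tri (v - u) u; rewrite subrK -opprB enormN in h2.
rewrite ler_norml; apply/andP; split; lra.
Qed.

End Aux.
Arguments enorm_rev {R d}.

Theorem mainTheorem12 (R : realType) (d : nat) (t : 'rV[R]_d)
    (f0 : R -> R) (f : 'rV[R]_d -> R) (g0 : R -> R) (Lam : R)
    (x wstar zstar : 'rV[R]_d) :
  (forall y, f y = f0 (enorm (y - t))) ->
  smooth_growth g0 ->
  x != t ->
  wstar != zstar ->
  smooth_sens f Lam g0 x = (sens_ratio f g0 x wstar zstar)%:E ->
  exists wL zL : 'rV[R]_d,
    [/\ on_line x t wL, on_line x t zL, wL != zL &
        (smooth_sens f Lam g0 x <= (sens_ratio f g0 x wL zL)%:E)%E].
Proof.
move=> hf hg hxt hwz hB.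
case: hg => hg1 hgmono hg0 _.
have npos : 0 < enorm (x - t) by apply: enorm_gt0; rewrite subr_eq0.
set n := enorm (x - t) in npos *.
set u := n^-1 *: (x - t).
have hu : enorm u = 1.
  by rewrite /u enorm_scale ger0_norm ?invr_ge0 ?(ltW npos) // mulVf ?gt_eqF.
have xtu : x - t = n *: u by rewrite /u scalerA mulfV ?gt_eqF ?scale1r.
have online : forall c, on_line x t (t + c *: u).
  move=> c; exists (1 - c / n); apply/rowP => i; rewrite /u !mxE; ring.
have fc : forall c, 0 <= c -> f (t + c *: u) = f0 c.
  by move=> c hc; rewrite hf addrAC subrr add0r enorm_scale hu mulr1 ger0_norm.
have gpos : forall z, 0 < growth g0 x z.
  by move=> z; apply: (lt_le_trans ltr01); apply: hg1; apply: enorm_ge0.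
set a := enorm (wstar - t); set b := enorm (zstar - t).
have ha : 0 <= a by apply: enorm_ge0.
have hb : 0 <= b by apply: enorm_ge0.
case: (eqVneq a b) => hab.
  exists x, t; split => //.
  - by exists 0; rewrite scale0r addr0.
  - by exists 1; rewrite scale1r addrC subrK.
  rewrite hB lee_fin /sens_ratio (hf wstar) (hf zstar) -/a -/b hab subrr normr0 mul0r.
  by rewrite divr_ge0 // mulr_ge0 ?enorm_ge0 // ltW.
exists (t + a *: u), (t + b *: u).
have dist : enorm ((t + a *: u) - (t + b *: u)) = `|a - b|.
  by rewrite opprD addrACA subrr add0r -scalerBl enorm_scale hu mulr1.
split; try apply: online.
  apply/eqP => E; move: dist; rewrite E subrr enorm0 => /esym/eqP.
  by rewrite normr_eq0 subr_eq0 (negbTE hab).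
rewrite hB lee_fin /sens_ratio fc // fc // (hf wstar) (hf zstar) -/a -/b dist.
have hd : `|a - b| <= enorm (wstar - zstar).
  have := enorm_rev (wstar - t) (zstar - t).
  by rewrite opprB addrA subrK.
have hgg : growth g0 x (t + b *: u) <= growth g0 x zstar.
  rewrite /growth; apply: hgmono; first exact: enorm_ge0.
  rewrite opprD addrA xtu -scalerBl enorm_scale hu mulr1.
  have := enorm_rev (x - t) (zstar - t).
  by rewrite opprB addrA subrK.
have hP : 0 < `|a - b| by rewrite normr_gt0 subr_eq0.
apply: ler_wpM2l; first exact: normr_ge0.
rewrite lef_pV2 ?posrE ?mulr_gt0 ?gpos ?enorm_gt0 ?subr_eq0 //.
exact: ler_pM (normr_ge0 _) (ltW (gpos _)) hd hgg.
Qed.
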